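(* Let $f:\mathbb{R}^n\to\mathbb{R}^n$ be continuously differentiable and $q:\mathbb{R}^n\to\mathbb{R}\cup\{+\infty\}$ proper, convex and lower semicontinuous. Let $\hat x\in\mathbb{R}^n$, $(\hat d,\hat d^* )\in\mathrm{gph}\,\partial q$, and let $G$ be a symmetric positive semidefinite $n\times n$ matrix with $\|G\|\le1$ such that $Gv^*\in D^*(\partial q)(\hat d,\hat d^* )((I-G)v^* )$ for all $v^*\in\mathbb{R}^n$. Assume that \[0\in\nabla f(\hat x)^Ts+D^*(\partial q)(\hat d,\hat d^* )(s)\ \Longrightarrow\ s=0.\] Then the matrix $(I-G)\nabla f(\hat x)+G$ is nonsingular and \[\|((I-G)\nabla f(\hat x)+G)^{-1}\|\le 1+\frac1\mu\|\nabla f(\hat x)-I\|,\qquad\text{where } \mu=\min_{\|s\|=1}\operatorname{dist}\bigl(0,\nabla f(\hat x)^Ts+D^*(\partial q)(\hat d,\hat d^* )(s)\bigr).\]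
   Context: $\partial q$ is the convex subdifferential, $\nabla f(\hat x)$ the Jacobian, norms are Euclidean/spectral. For a closed set $C$ and $\bar z\in C$: the regular normal cone $\widehat N_C(\bar z)$ is the polar of the tangent cone $T_C(\bar z)=\{w:\exists t_k\downarrow0,w_k\to w,\ \bar z+t_kw_k\in C\}$; the limiting normal cone $N_C(\bar z)$ consists of all limits of $z_k^*\in\widehat N_C(z_k)$ with $z_k\in C$, $z_k\to\bar z$. For a set-valued map $F$ with $(\bar x,\bar y)\in\mathrm{gph}\, F$, the limiting coderivative is $D^*F(\bar x,\bar y)(v^* )=\{u^*:(u^*,-v^* )\in N_{\mathrm{gph}\, F}(\bar x,\bar y)\}$. *)

(* Defs.v *)
From HB Require Import structures.
From mathcomp Require Import all_boot all_order all_algebra.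
From mathcomp Require Import all_classical all_reals all_analysis.
Set Implicit Arguments. Unset Strict Implicit. Unset Printing Implicit Defensive.
Import Order.TTheory GRing.Theory Num.Theory.
Import numFieldNormedType.Exports.
Local Open Scope classical_set_scope.
Local Open Scope ring_scope.

Section Defs.
Variable R : realType.

Definition dot m (u v : 'rV[R]_m) : R := (u *m v^T) 0 0.
Definition enorm m (v : 'rV[R]_m) : R := Num.sqrt (dot v v).

(* the action of a matrix A on a vector v, i.e. A v, written for row vectors *)
Definition mxapp m (A : 'M[R]_m) (v : 'rV[R]_m) : 'rV[R]_m := v *m A^T.

Definition opnorm m (A : 'M[R]_m) : R :=
  sup [set enorm (mxapp A v) | v in [set v : 'rV[R]_m | enorm v <= 1]].

(* the Jacobian matrix  \nabla f(x)  (entry (i,j) = d f_i / d x_j);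
   the library's [jacobian] is its transpose (row-vector convention) *)
Definition Jac m (f : 'rV[R]_m -> 'rV[R]_m) (x : 'rV[R]_m) : 'M[R]_m :=
  (jacobian f x)^T.

Definition C1 m (f : 'rV[R]_m -> 'rV[R]_m) : Prop :=
  (forall x, differentiable f x) /\ continuous (jacobian f).

Definition econv m (u : nat -> 'rV[R]_m) (l : 'rV[R]_m) : Prop :=
  (fun k => enorm (u k - l)) @ \oo --> (0 : R).

Definition proper_fun m (q : 'rV[R]_m -> \bar R) : Prop :=
  (forall x, q x != -oo%E) /\ (exists x, q x != +oo%E).

Definition convex_fun m (q : 'rV[R]_m -> \bar R) : Prop :=
  forall (x y : 'rV[R]_m) (t : R), 0 <= t <= 1 ->
    (q (t *: x + (1 - t) *: y)%R <= t%:E * q x + (1 - t)%:E * q y)%E.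

Definition lsc_fun m (q : 'rV[R]_m -> \bar R) : Prop :=
  forall (x : 'rV[R]_m) (a : R), (a%:E < q x)%E ->
    exists2 delta : R, 0 < delta &
      forall y, enorm (y - x) < delta -> (a%:E < q y)%E.

Definition subdiff m (q : 'rV[R]_m -> \bar R) (d ds : 'rV[R]_m) : Prop :=
  q d \is a fin_num /\
  forall y, (q d + (dot ds (y - d))%:E <= q y)%E.

Definition gph_subdiff m (q : 'rV[R]_m -> \bar R) : set 'rV[R]_(m + m) :=
  [set z | exists d ds, z = row_mx d ds /\ subdiff q d ds].

Definition tangent_cone m (C : set 'rV[R]_m) (z : 'rV[R]_m) : set 'rV[R]_m :=
  [set w | exists (t : nat -> R) (w_ : nat -> 'rV[R]_m),
      (forall k, 0 < t k) /\ t @ \oo --> (0 : R) /\ econv w_ w /\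
      (forall k, C (z + t k *: w_ k))].

Definition reg_normal_cone m (C : set 'rV[R]_m) (z : 'rV[R]_m) : set 'rV[R]_m :=
  [set zs | forall w, tangent_cone C z w -> dot zs w <= 0].

Definition lim_normal_cone m (C : set 'rV[R]_m) (z : 'rV[R]_m) : set 'rV[R]_m :=
  [set zs | exists (z_ zs_ : nat -> 'rV[R]_m),
      (forall k, C (z_ k)) /\ econv z_ z /\
      (forall k, reg_normal_cone C (z_ k) (zs_ k)) /\ econv zs_ zs].

Definition coderiv_subdiff m (q : 'rV[R]_m -> \bar R) (d ds vs : 'rV[R]_m)
  : set 'rV[R]_m :=
  [set us | lim_normal_cone (gph_subdiff q) (row_mx d ds) (row_mx us (- vs))].

(* distance from 0 to a set (+oo for the empty set) *)
Definition dist0 m (S : set 'rV[R]_m) : \bar R :=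
  ereal_inf [set (enorm y)%:E | y in S].

End Defs.

(* Main.v *)
Require Import Defs.
From HB Require Import structures.
From mathcomp Require Import all_boot all_order all_algebra.
From mathcomp Require Import all_classical all_reals all_analysis.
Import Order.TTheory GRing.Theory Num.Theory.
Import numFieldNormedType.Exports.
Local Open Scope classical_set_scope.
Local Open Scope ring_scope.
From mathcomp Require Import ring lra.
Set Implicit Arguments. Unset Strict Implicit. Unset Printing Implicit Defensive.
Lemma dotE (R : realType) m (u v : 'rV[R]_m) : dot u v = \sum_i u 0 i * v 0 i.
Proof. by rewrite /dot mxE; apply: eq_bigr => i _; rewrite mxE. Qed.

Lemma dotC (R : realType) m (u v : 'rV[R]_m) : dot u v = dot v u.
Proof. by rewrite !dotE; apply: eq_bigr => i _; rewrite mulrC. Qed.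

Lemma dotDl (R : realType) m (u w v : 'rV[R]_m) : dot (u + w) v = dot u v + dot w v.
Proof. by rewrite !dotE -big_split; apply: eq_bigr => i _; rewrite mxE mulrDl. Qed.

Lemma dotZl (R : realType) m (a : R) (u v : 'rV[R]_m) : dot (a *: u) v = a * dot u v.
Proof. by rewrite !dotE mulr_sumr; apply: eq_bigr => i _; rewrite mxE mulrA. Qed.

Lemma dotNl (R : realType) m (u v : 'rV[R]_m) : dot (- u) v = - dot u v.
Proof. by rewrite -scaleN1r dotZl mulN1r. Qed.

Lemma dotBl (R : realType) m (u w v : 'rV[R]_m) : dot (u - w) v = dot u v - dot w v.
Proof. by rewrite dotDl dotNl. Qed.

Lemma dotDr (R : realType) m (u w v : 'rV[R]_m) : dot v (u + w) = dot v u + dot v w.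
Proof. by rewrite dotC dotDl !(dotC v). Qed.

Lemma dotZr (R : realType) m (a : R) (u v : 'rV[R]_m) : dot v (a *: u) = a * dot v u.
Proof. by rewrite dotC dotZl dotC. Qed.

Lemma dotNr (R : realType) m (u v : 'rV[R]_m) : dot v (- u) = - dot v u.
Proof. by rewrite dotC dotNl dotC. Qed.

Lemma dotBr (R : realType) m (u w v : 'rV[R]_m) : dot v (u - w) = dot v u - dot v w.
Proof. by rewrite dotDr dotNr. Qed.

Lemma dot0l (R : realType) m (v : 'rV[R]_m) : dot 0 v = 0.
Proof. by rewrite dotE big1 // => i _; rewrite mxE mul0r. Qed.

Lemma dot0r (R : realType) m (v : 'rV[R]_m) : dot v 0 = 0.
Proof. by rewrite dotC dot0l. Qed.

Lemma dot_ge0 (R : realType) m (v : 'rV[R]_m) : 0 <= dot v v.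
Proof. by rewrite dotE; apply: sumr_ge0 => i _; rewrite -expr2 sqr_ge0. Qed.

Lemma dot_eq0 (R : realType) m (v : 'rV[R]_m) : dot v v = 0 -> v = 0.
Proof.
rewrite dotE => /eqP; rewrite psumr_eq0 => [/allP H|i _]; last by rewrite -expr2 sqr_ge0.
apply/rowP => i; rewrite mxE; apply/eqP; rewrite -sqrf_eq0 expr2.
by apply: (implyP (H i (mem_index_enum _))).
Qed.

Lemma enorm_ge0 (R : realType) m (v : 'rV[R]_m) : 0 <= enorm v.
Proof. exact: sqrtr_ge0. Qed.

Lemma enorm_sq (R : realType) m (v : 'rV[R]_m) : enorm v ^+ 2 = dot v v.
Proof. by rewrite /enorm sqr_sqrtr // dot_ge0. Qed.

Lemma enorm_eq0 (R : realType) m (v : 'rV[R]_m) : enorm v = 0 -> v = 0.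
Proof. by move=> H; apply: dot_eq0; rewrite -enorm_sq H expr0n. Qed.

Lemma enorm0 (R : realType) m : enorm (0 : 'rV[R]_m) = 0.
Proof. by rewrite /enorm dot0l sqrtr0. Qed.

Lemma enormZ (R : realType) m (a : R) (v : 'rV[R]_m) : enorm (a *: v) = `|a| * enorm v.
Proof. by rewrite /enorm dotZl dotZr mulrA sqrtrM ?sqr_ge0 // -expr2 sqrtr_sqr. Qed.

Lemma enormN (R : realType) m (v : 'rV[R]_m) : enorm (- v) = enorm v.
Proof. by rewrite -scaleN1r enormZ normrN normr1 mul1r. Qed.

Lemma enormB (R : realType) m (u v : 'rV[R]_m) : enorm (u - v) = enorm (v - u).
Proof. by rewrite -enormN opprB. Qed.

Lemma CS (R : realType) m (u v : 'rV[R]_m) : dot u v <= enorm u * enorm v.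
Proof.
set a := enorm u; set b := enorm v.
have a0 : 0 <= a := enorm_ge0 u. have b0 : 0 <= b := enorm_ge0 v.
have := dot_ge0 (b *: u - a *: v).
rewrite !dotBl !dotBr !dotZl !dotZr -!enorm_sq -/a -/b (dotC v u).
have -> : b * (b * a ^+ 2) - b * (a * dot u v) - (a * (b * dot u v) - a * (a * b ^+ 2))
   = 2 * (a * b) * (a * b - dot u v) by rewrite !expr2; ring.
have [ab0|ab0] := eqVneq (a * b) 0.
  move=> _; rewrite ab0; move/eqP: ab0; rewrite mulf_eq0 => /orP[]/eqP H.
    by rewrite (enorm_eq0 H) dot0l.
  by rewrite (enorm_eq0 H) dot0r.
have abp : 0 < a * b by rewrite lt0r ab0 mulr_ge0.
by rewrite pmulr_rge0 ?subr_ge0 // mulr_gt0.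
Qed.

Lemma CSabs (R : realType) m (u v : 'rV[R]_m) : `|dot u v| <= enorm u * enorm v.
Proof.
rewrite ler_norml CS andbT lerNl -dotNl -(enormN u); exact: CS.
Qed.

Lemma enormD (R : realType) m (u v : 'rV[R]_m) : enorm (u + v) <= enorm u + enorm v.
Proof.
rewrite -ler_sqr ?nnegrE ?addr_ge0 ?enorm_ge0 //.
rewrite enorm_sq dotDl !dotDr (dotC v u) sqrrD -!enorm_sq.
have := CS u v; lra.
Qed.

Lemma enorm_coord (R : realType) m (v : 'rV[R]_m) i : `|v 0 i| <= enorm v.
Proof.
rewrite -ler_sqr ?nnegrE ?enorm_ge0 // enorm_sq dotE real_normK ?num_real //.
rewrite (bigD1 i) //= -expr2 lerDl; by apply: sumr_ge0 => j _; rewrite -expr2 sqr_ge0.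
Qed.

Lemma dot_row_mx (R : realType) m1 m2 (a c : 'rV[R]_m1) (b d : 'rV[R]_m2) :
  dot (row_mx a b) (row_mx c d) = dot a c + dot b d.
Proof. by rewrite /dot tr_row_mx mul_row_col mxE. Qed.
Lemma dot_mxapp (R : realType) m (A : 'M[R]_m) (u v : 'rV[R]_m) :
  dot u (mxapp A v) = dot (mxapp A^T u) v.
Proof. by rewrite /dot /mxapp trmx_mul !trmxK mulmxA. Qed.

Lemma mxappD (R : realType) m (A : 'M[R]_m) (u v : 'rV[R]_m) :
  mxapp A (u + v) = mxapp A u + mxapp A v.
Proof. by rewrite /mxapp mulmxDl. Qed.

Lemma mxappZ (R : realType) m (A : 'M[R]_m) (a : R) (v : 'rV[R]_m) :
  mxapp A (a *: v) = a *: mxapp A v.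
Proof. by rewrite /mxapp scalemxAl. Qed.

Lemma mxapp0 (R : realType) m (A : 'M[R]_m) : mxapp A 0 = 0.
Proof. by rewrite /mxapp mul0mx. Qed.

Lemma mxapp_coord (R : realType) m (A : 'M[R]_m) (v : 'rV[R]_m) i :
  mxapp A v 0 i = dot v (row i A).
Proof. by rewrite /mxapp dotE mxE; apply: eq_bigr => j _; rewrite !mxE. Qed.

Definition frob (R : realType) m (A : 'M[R]_m) : R :=
  Num.sqrt (\sum_i dot (row i A) (row i A)).

Lemma mxapp_bound (R : realType) m (A : 'M[R]_m) (v : 'rV[R]_m) :
  enorm (mxapp A v) <= enorm v * frob A.
Proof.
have s0 : 0 <= \sum_i dot (row i A) (row i A) by apply: sumr_ge0 => i _; exact: dot_ge0.
rewrite -ler_sqr ?nnegrE ?enorm_ge0 ?mulr_ge0 ?sqrtr_ge0 //.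
rewrite exprMn.
have -> : frob A ^+ 2 = \sum_i dot (row i A) (row i A) by rewrite sqr_sqrtr.
rewrite (enorm_sq (mxapp A v)) dotE mulr_sumr.
apply: ler_sum => i _; rewrite -expr2 mxapp_coord -(enorm_sq (row i A)) -exprMn.
rewrite -real_normK ?num_real // ler_sqr ?nnegrE ?normr_ge0 ?mulr_ge0 ?enorm_ge0 //.
exact: CSabs.
Qed.

Lemma opnorm_has_sup (R : realType) m (A : 'M[R]_m) :
  has_sup [set enorm (mxapp A v) | v in [set v : 'rV[R]_m | enorm v <= 1]].
Proof.
split; first by exists (enorm (mxapp A 0)), 0 => //=; rewrite enorm0.
exists (frob A) => _ [v /= v1 <-].
apply: (le_trans (mxapp_bound A v)).
by rewrite ler_piMl ?sqrtr_ge0.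
Qed.

Lemma opnorm_ge0 (R : realType) m (A : 'M[R]_m) : 0 <= opnorm A.
Proof.
apply: (le_trans (enorm_ge0 (mxapp A 0))).
apply: sup_upper_bound; first exact: opnorm_has_sup.
by exists 0 => //=; rewrite enorm0.
Qed.

Lemma opnorm_ub (R : realType) m (A : 'M[R]_m) (v : 'rV[R]_m) :
  enorm (mxapp A v) <= opnorm A * enorm v.
Proof.
have [->|v0] := eqVneq v 0; first by rewrite mxapp0 enorm0 mulr0.
have e0 : 0 < enorm v.
  by rewrite lt0r enorm_ge0 andbT; apply/eqP => /enorm_eq0 /eqP; rewrite (negbTE v0).
have : enorm (mxapp A ((enorm v)^-1 *: v)) <= opnorm A.
  apply: sup_upper_bound; first exact: opnorm_has_sup.
  exists ((enorm v)^-1 *: v) => //=.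
  by rewrite enormZ ger0_norm ?invr_ge0 ?enorm_ge0 // mulVf // gt_eqF.
rewrite mxappZ enormZ ger0_norm ?invr_ge0 ?enorm_ge0 // mulrC.
by rewrite ler_pdivrMr.
Qed.

Lemma opnorm_le (R : realType) m (A : 'M[R]_m) (c : R) :
  0 <= c -> (forall v, enorm (mxapp A v) <= c * enorm v) -> opnorm A <= c.
Proof.
move=> c0 H; apply: ge_sup; first by case: (opnorm_has_sup A).
move=> _ [v /= v1 <-]; apply: (le_trans (H v)).
by rewrite ler_piMr.
Qed.

Lemma opnorm_tr (R : realType) m (A : 'M[R]_m) (v : 'rV[R]_m) :
  enorm (mxapp A^T v) <= opnorm A * enorm v.
Proof.
set x := mxapp A^T v.
have H : enorm x ^+ 2 <= (opnorm A * enorm v) * enorm x.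
  rewrite enorm_sq {1}/x -(trmxK A) -dot_mxapp trmxK.
  apply: (le_trans (CS _ _)).
  apply: (le_trans (ler_wpM2l (enorm_ge0 v) (opnorm_ub A x))).
  by rewrite mulrCA mulrA.
have [x0|x0] := eqVneq (enorm x) 0.
  by rewrite x0 mulr_ge0 ?opnorm_ge0 ?enorm_ge0.
have xp : 0 < enorm x by rewrite lt0r x0 enorm_ge0.
by move: H; rewrite expr2 ler_pM2r.
Qed.
Lemma cvg0_le (R : realType) (a b : nat -> R) (c : R) :
  0 <= c -> (forall k, 0 <= a k) -> (forall k, a k <= c * b k) ->
  b @ \oo --> (0:R) -> a @ \oo --> (0:R).
Proof.
move=> c0 a0 ab /cvgrPdist_lt Hb; apply/cvgrPdist_lt => e e0.
have c1 : 0 < c + 1 by rewrite ltr_wpDl.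
apply: filterS (Hb (e / (c + 1)) (divr_gt0 e0 c1)) => k.
rewrite !sub0r !normrN => H.
rewrite ger0_norm //; apply: (le_lt_trans (ab k)).
apply: (le_lt_trans (y := c * `|b k|)); first by rewrite ler_wpM2l // ler_norm.
apply: (le_lt_trans (y := c * (e / (c + 1)))); first by rewrite ler_wpM2l // ltW.
rewrite mulrA ltr_pdivrMr //; nra.
Qed.
Lemma econv_le (R : realType) m (u : nat -> 'rV[R]_m) l (b : nat -> R) (c : R) :
  0 <= c -> (forall k, enorm (u k - l) <= c * b k) -> b @ \oo --> (0:R) -> econv u l.
Proof. by move=> c0 H; apply: cvg0_le c0 _ H => k; exact: enorm_ge0. Qed.

Lemma econv_harm (R : realType) m (u : nat -> 'rV[R]_m) l (c : R) :
  0 <= c -> (forall k, enorm (u k - l) <= c * k.+1%:R^-1) -> econv u l.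
Proof. by move=> c0 H; apply: (econv_le c0 H); exact: cvg_harmonic. Qed.

Lemma econvZ (R : realType) m (u : nat -> 'rV[R]_m) l (t : R) :
  econv u l -> econv (fun k => t *: u k) (t *: l).
Proof.
move=> H; apply: (econv_le (normr_ge0 t) _ H) => k.
by rewrite -scalerBr enormZ.
Qed.

Lemma econv_ev (R : realType) m (u : nat -> 'rV[R]_m) l (e : R) :
  econv u l -> 0 < e -> \forall k \near \oo, enorm (u k - l) < e.
Proof.
move=> /cvgrPdist_lt H /H; apply: filterS => k.
by rewrite sub0r normrN ger0_norm // enorm_ge0.
Qed.

Lemma reg_ncZ (R : realType) m (C : set 'rV[R]_m) z zs (t : R) :
  0 <= t -> reg_normal_cone C z zs -> reg_normal_cone C z (t *: zs).
Proof. by move=> t0 H w /H Hw; rewrite dotZl mulr_ge0_le0. Qed.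

Lemma lim_ncZ (R : realType) m (C : set 'rV[R]_m) z zs (t : R) :
  0 <= t -> lim_normal_cone C z zs -> lim_normal_cone C z (t *: zs).
Proof.
move=> t0 [z_ [zs_ [Cz [cz [rn czs]]]]].
exists z_, (fun k => t *: zs_ k); split => //; split => //; split.
  by move=> k; exact: reg_ncZ.
exact: econvZ.
Qed.

Lemma coderivZ (R : realType) m (q : 'rV[R]_m -> \bar R) d ds s y (t : R) :
  0 <= t -> coderiv_subdiff q d ds s y -> coderiv_subdiff q d ds (t *: s) (t *: y).
Proof.
move=> t0 H; rewrite /coderiv_subdiff /= -scalerN -scale_row_mx.
exact: lim_ncZ.
Qed.

Lemma lim_nc_closed (R : realType) m (C : set 'rV[R]_m) z zs :
  (forall e : R, 0 < e -> exists zs', lim_normal_cone C z zs' /\ enorm (zs' - zs) < e) ->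
  lim_normal_cone C z zs.
Proof.
move=> H.
have H1 : forall k : nat, exists p : 'rV[R]_m * 'rV[R]_m,
    [/\ C p.1, reg_normal_cone C p.1 p.2, enorm (p.1 - z) <= 1 * k.+1%:R^-1
      & enorm (p.2 - zs) <= 2 * k.+1%:R^-1].
  move=> k; have ek : 0 < k.+1%:R^-1 :> R by rewrite invr_gt0 ltr0Sn.
  have [zs' [[z_ [zs_ [Cz [cz [rn czs]]]]] d]] := H _ ek.
  have [j [Hj1 Hj2]] := filter_ex (filterI (econv_ev cz ek) (econv_ev czs ek)).
  exists (z_ j, zs_ j); split => //=; first by rewrite mul1r ltW.
  have -> : zs_ j - zs = (zs_ j - zs') + (zs' - zs) by rewrite addrA subrK.
  apply: (le_trans (enormD _ _)); rewrite mulr2n mulrDl mul1r.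
  by rewrite lerD // ltW.
have [f Hf] := choice H1.
exists (fun k => (f k).1), (fun k => (f k).2); split; first by move=> k; case: (Hf k).
split; first by apply: (econv_harm ler01) => k; case: (Hf k).
split; first by move=> k; case: (Hf k).
by apply: (econv_harm (c := 2)) => // k; case: (Hf k).
Qed.
Lemma enorm_row_mx (R : realType) m1 m2 (a : 'rV[R]_m1) (b : 'rV[R]_m2) :
  enorm (row_mx a b) = Num.sqrt (dot a a + dot b b).
Proof. by rewrite /enorm dot_row_mx. Qed.

Lemma enorm_row_le (R : realType) m1 m2 (a : 'rV[R]_m1) (b : 'rV[R]_m2) :
  enorm (row_mx a b) <= enorm a + enorm b.
Proof.
rewrite -ler_sqr ?nnegrE ?addr_ge0 ?enorm_ge0 // enorm_sq dot_row_mx sqrrD -!enorm_sq.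
have := mulr_ge0 (enorm_ge0 a) (enorm_ge0 b); lra.
Qed.

Lemma enorm_lsub (R : realType) m1 m2 (z : 'rV[R]_(m1 + m2)) :
  enorm (lsubmx z) <= enorm z.
Proof.
rewrite -{2}(hsubmxK z) enorm_row_mx /enorm ler_sqrt ?addr_ge0 ?dot_ge0 //.
by rewrite lerDl dot_ge0.
Qed.

Lemma enorm_rsub (R : realType) m1 m2 (z : 'rV[R]_(m1 + m2)) :
  enorm (rsubmx z) <= enorm z.
Proof.
rewrite -{2}(hsubmxK z) enorm_row_mx /enorm ler_sqrt ?addr_ge0 ?dot_ge0 //.
by rewrite lerDr dot_ge0.
Qed.

Lemma enorm_swap (R : realType) m1 m2 (a : 'rV[R]_m1) (b : 'rV[R]_m2) :
  enorm (row_mx b (- a)) = enorm (row_mx a b).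
Proof. by rewrite !enorm_row_mx dotNl dotNr opprK addrC. Qed.

Lemma enorm_rev (R : realType) m (x y : 'rV[R]_m) :
  `|enorm x - enorm y| <= enorm (x - y).
Proof.
have h1 := enormD (x - y) y; rewrite subrK in h1.
have h2 := enormD (y - x) x; rewrite subrK enormB in h2.
rewrite ler_norml; apply/andP; split; lra.
Qed.

Lemma coord_le_mxnorm (R : realType) N (v : 'rV[R]_N) i : `|v 0 i| <= `|v|.
Proof.
have -> : `|v| = mx_norm v by [].
rewrite mx_normrE.
exact: (le_bigmax _ (fun ij : 'I_1 * 'I_N => `|v ij.1 ij.2|) (0, i)).
Qed.

Lemma enorm_mx_norm (R : realType) N (v : 'rV[R]_N) : enorm v <= N%:R * `|v|.
Proof.
rewrite -ler_sqr ?nnegrE ?enorm_ge0 ?mulr_ge0 ?normr_ge0 // enorm_sq dotE.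
apply: (le_trans (y := \sum_(i < N) `|v| ^+ 2)).
  apply: ler_sum => i _; rewrite -expr2 -real_normK ?num_real //.
  by rewrite ler_sqr ?nnegrE ?normr_ge0 // coord_le_mxnorm.
rewrite sumr_const card_ord exprMn.
have -> : `|v| ^+ 2 *+ N = N%:R * `|v| ^+ 2 by rewrite mulr_natl.
rewrite ler_wpM2r ?sqr_ge0 //.
case: N v => [|N] v; first by rewrite expr0n.
by rewrite expr2 ler_peMl // ler1n.
Qed.

Lemma closure_approx (R : realType) N (A : set 'rV[R]_N) p :
  closure A p -> forall e : R, 0 < e -> exists z, A z /\ enorm (z - p) < e.
Proof.
move=> cl e e0.
have d0 : 0 < e / N.+1%:R by rewrite divr_gt0.
have [z [Az bz]] := cl _ (nbhsx_ballx p _ d0).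
exists z; split => //.
move: bz; rewrite -ball_normE /ball_ /= distrC => bz.
apply: (le_lt_trans (enorm_mx_norm _)).
apply: (le_lt_trans (y := N%:R * (e / N.+1%:R))).
  by rewrite ler_wpM2l // ltW.
rewrite mulrA ltr_pdivrMr // mulrC ltr_pM2l //.
by rewrite ltr_nat.
Qed.
Lemma mu_pos (R : realType) n (q : 'rV[R]_n -> \bar R) dh dsh (J : 'M[R]_n) :
  (forall s, (exists2 y, coderiv_subdiff q dh dsh s y & mxapp J^T s + y = 0) -> s = 0) ->
  exists2 m : R, 0 < m & forall s y, enorm s = 1 ->
    coderiv_subdiff q dh dsh s y -> m <= enorm (mxapp J^T s + y).
Proof.
move=> Hinj.
set L := opnorm J^T. set C := L + 1.
have L0 : 0 <= L by exact: opnorm_ge0.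
have big : forall s y, enorm s = 1 -> C < enorm y -> 1 <= enorm (mxapp J^T s + y).
  move=> s y s1 yC.
  have h1 := opnorm_ub J^T s; rewrite s1 mulr1 -/L in h1.
  have h2 := enormD (mxapp J^T s + y) (- mxapp J^T s).
  rewrite addrAC subrr add0r enormN in h2.
  rewrite /C in yC; lra.
set K := [set z : 'rV[R]_(n + n) | enorm (lsubmx z) = 1 /\ enorm (rsubmx z) <= C /\
            coderiv_subdiff q dh dsh (lsubmx z) (rsubmx z)].
case: (pselect (K !=set0)) => [Kne|Ke]; last first.
  exists 1 => // s y s1 cd.
  case: (leP (enorm y) C) => yC; last exact: big.
  exfalso; apply: Ke; exists (row_mx s y); rewrite /K /= row_mxKl row_mxKr.
  by split.
set g := fun z : 'rV[R]_(n + n) => enorm (mxapp J^T (lsubmx z) + rsubmx z).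
have gcont : continuous g.
  move=> x; apply: (proj2 (@cvgrPdist_lt _ _ _ (nbhs x) (nbhs_filter x) g (g x))) => e e0.
  set N := (n + n)%:R : R.
  have N0 : 0 <= N by rewrite ler0n.
  set P := (L + 1) * N.
  have P0 : 0 <= P by rewrite mulr_ge0 // addr_ge0.
  have Pp : 0 < P + 1 by rewrite ltr_wpDl.
  have f4 : P * (e / (P + 1)) < e by rewrite mulrA ltr_pdivrMr //; nra.
  apply/nbhs_ballP; exists (e / (P + 1)); first exact: divr_gt0.
  move=> z; rewrite -ball_normE /ball_ /= => xz.
  have E : mxapp J^T (lsubmx (x - z)) + rsubmx (x - z) =
           (mxapp J^T (lsubmx x) + rsubmx x) - (mxapp J^T (lsubmx z) + rsubmx z).
    by rewrite !linearB /mxapp mulmxBl /= opprD addrACA.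
  have h1 := enorm_rev (mxapp J^T (lsubmx x) + rsubmx x) (mxapp J^T (lsubmx z) + rsubmx z).
  rewrite -E in h1.
  have h2 := enormD (mxapp J^T (lsubmx (x - z))) (rsubmx (x - z)).
  have h3 := opnorm_ub J^T (lsubmx (x - z)).
  have h4 := enorm_lsub (x - z). have h5 := enorm_rsub (x - z).
  have h6 := enorm_mx_norm (x - z).
  have f1 : L * enorm (lsubmx (x - z)) <= L * enorm (x - z) by rewrite ler_wpM2l.
  have f2 : (L + 1) * enorm (x - z) <= (L + 1) * (N * `|x - z|).
    by rewrite ler_wpM2l // addr_ge0.
  have f3 : P * `|x - z| <= P * (e / (P + 1)) by rewrite ler_wpM2l // ltW.
  rewrite /g; rewrite /P in f3 f4; rewrite /N in f2.
  have : (L + 1) * ((n + n)%:R * `|x - z|) = (L + 1) * (n + n)%:R * `|x - z| by rewrite mulrA.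
  rewrite -/L in h3; lra.
have Kcomp : compact K.
  apply: bounded_closed_compact.
    exists (1 + C); split; first by rewrite num_real.
    move=> M hM z [z1 [z2 z3]] /=.
    have M0 : 0 <= M by rewrite /C in hM; lra.
    have -> : `|z| = mx_norm z by [].
    rewrite mx_normrE; apply: bigmax_le => // -[i j] _ /=.
    rewrite (ord1 i).
    have h1 := enorm_coord z j.
    have h2 := enorm_row_le (lsubmx z) (rsubmx z); rewrite hsubmxK in h2.
    lra.
  move=> p clp; have ap := closure_approx clp.
  have Hl : forall z, enorm (lsubmx p) - enorm (lsubmx z) <= enorm (z - p) /\
                      enorm (lsubmx z) - enorm (lsubmx p) <= enorm (z - p).
    move=> z; have := enorm_rev (lsubmx p) (lsubmx z); rewrite -linearB /=.
    have := enorm_lsub (p - z); rewrite enormB (enormB z) => h1 h2.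
    move: h2; rewrite ler_norml => /andP[h2 h3]; split; lra.
  have Hr : forall z, enorm (rsubmx p) - enorm (rsubmx z) <= enorm (z - p).
    move=> z; have := enorm_rev (rsubmx p) (rsubmx z); rewrite -linearB /=.
    have := enorm_rsub (p - z); rewrite enormB (enormB z) => h1 h2.
    move: h2; rewrite ler_norml => /andP[h2 h3]; lra.
  split; [|split].
  - apply/eqP; rewrite eq_le; apply/andP; split; apply/ler_addgt0Pr => e e0;
      have [z [[z1 [z2 z3]] ze]] := ap e e0; have [h1 h2] := Hl z; lra.
  - apply/ler_addgt0Pr => e e0.
    have [z [[z1 [z2 z3]] ze]] := ap e e0; have h1 := Hr z; lra.
  - apply: lim_nc_closed => e e0.
    have [z [[z1 [z2 z3]] ze]] := ap e e0.
    exists (row_mx (rsubmx z) (- lsubmx z)); split => //.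
    rewrite opp_row_mx add_row_mx -opprD enorm_swap -!linearB /= hsubmxK //.
have [c Kc cmin] := EVT_min_rV Kne Kcomp (continuous_subspaceT gcont).
rewrite inE in Kc; case: (Kc) => c1 [c2 c3].
have gc0 : 0 < g c.
  rewrite lt0r enorm_ge0 andbT; apply/eqP => /enorm_eq0 H.
  have := Hinj (lsubmx c) (ex_intro2 _ _ (rsubmx c) c3 H).
  by move=> H0; move: c1; rewrite H0 enorm0 => /eqP; rewrite eq_sym oner_eq0.
exists (Num.min (g c) 1); first by rewrite lt_min gc0 ltr01.
move=> s y s1 cd; rewrite ge_min; apply/orP.
case: (leP (enorm y) C) => yC; last by right; exact: big.
left; have := cmin (row_mx s y); rewrite /g row_mxKl row_mxKr; apply.
by rewrite inE /K /= row_mxKl row_mxKr.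
Qed.
Lemma opnorm_trle (R : realType) m (A : 'M[R]_m) : opnorm A^T <= opnorm A.
Proof. exact: opnorm_le (opnorm_ge0 A) (opnorm_tr A). Qed.

Lemma opnorm_inv_le (R : realType) m (M : 'M[R]_m) (c : R) :
  M \in unitmx -> 0 <= c -> (forall u, enorm u <= c * enorm (u *m M)) ->
  opnorm (invmx M) <= c.
Proof.
move=> Mu c0 H.
have H1 : opnorm (invmx M)^T <= c.
  apply: opnorm_le => // w.
  have := H (w *m invmx M); rewrite mulmxKV //.
  by rewrite /mxapp trmxK.
by apply: le_trans H1; rewrite -{1}(trmxK (invmx M)) opnorm_trle.
Qed.

Unset Implicit Arguments. Set Strict Implicit.
Theorem proposition4p2 (R : realType) (n : nat)
  (f : 'rV[R]_n -> 'rV[R]_n) (q : 'rV[R]_n -> \bar R)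
  (xh dh dsh : 'rV[R]_n) (G : 'M[R]_n) :
  C1 f -> proper_fun q -> convex_fun q -> lsc_fun q ->
  subdiff q dh dsh ->
  G^T = G -> (forall v : 'rV[R]_n, 0 <= dot v (mxapp G v)) ->
  opnorm G <= 1 ->
  (forall vs : 'rV[R]_n,
      coderiv_subdiff q dh dsh (mxapp (1%:M - G) vs) (mxapp G vs)) ->
  (forall s : 'rV[R]_n,
      (exists2 y, coderiv_subdiff q dh dsh s y &
                  mxapp (Jac f xh)^T s + y = 0) -> s = 0) ->
  let M := (1%:M - G) *m Jac f xh + G in
  let mu := ereal_inf [set dist0 [set mxapp (Jac f xh)^T s + y
                                  | y in coderiv_subdiff q dh dsh s]
                      | s in [set s : 'rV[R]_n | enorm s = 1]] in
  M \in unitmx /\ (0 < mu)%E /\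
  ((opnorm (invmx M))%:E <= 1 + (opnorm (Jac f xh - 1%:M))%:E * mu^-1)%E.
Proof.
move=> _ _ _ _ _ Gs _ _ Hcod Hinj M mu.
set J := Jac f xh.
have Hid : forall u : 'rV[R]_n,
    u *m M = mxapp J^T (mxapp (1%:M - G) u) + mxapp G u.
  move=> u; rewrite /M /mxapp !trmxK linearB /= trmx1 Gs.
  by rewrite mulmxDr mulmxA.
have Hu : forall u : 'rV[R]_n, u = mxapp (1%:M - G) u + mxapp G u.
  by move=> u; rewrite /mxapp linearB /= trmx1 Gs mulmxBr mulmx1 subrK.
have Munit : M \in unitmx.
  rewrite -row_free_unit; apply: inj_row_free => u uM.
  have s0 : mxapp (1%:M - G) u = 0.
    apply: Hinj; exists (mxapp G u); first exact: Hcod.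
    by rewrite -Hid.
  have := Hid u; rewrite uM s0 mxapp0 add0r => G0.
  by rewrite (Hu u) s0 -G0 addr0.
have [m m0 Hm] := mu_pos Hinj.
have mum : (m%:E <= mu)%E.
  apply: le_ereal_inf_tmp => _ [s /= s1 <-].
  apply: le_ereal_inf_tmp => _ [_ [y /= cy <-] <-].
  by rewrite lee_fin; exact: Hm.
have mu0 : (0 < mu)%E by apply: lt_le_trans mum; rewrite lte_fin.
split => //; split => //.
have Ha : forall u : 'rV[R]_n, mxapp (1%:M - G) u != 0 ->
    (mu <= (enorm (u *m M) / enorm (mxapp (1%:M - G) u))%:E)%E.
  move=> u s0; set s := mxapp (1%:M - G) u.
  have es : 0 < enorm s.
    by rewrite lt0r enorm_ge0 andbT; apply/eqP => /enorm_eq0 /eqP; rewrite (negbTE s0).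
  set t := (enorm s)^-1.
  have t0 : 0 <= t by rewrite invr_ge0 ltW.
  apply: (le_trans (ereal_inf_lbound _)).
    exists (t *: s) => /=; first by rewrite enormZ ger0_norm // mulVf // gt_eqF.
    reflexivity.
  apply: ereal_inf_lbound.
  exists (mxapp J^T (t *: s) + t *: mxapp G u).
    by exists (t *: mxapp G u) => //; exact: (coderivZ t0 (Hcod u)).
  rewrite /= mxappZ -scalerDr -Hid enormZ ger0_norm // mulrC.
  by [].
have Hb : forall u : 'rV[R]_n,
    enorm u <= enorm (u *m M) + opnorm (J - 1%:M) * enorm (mxapp (1%:M - G) u).
  move=> u; set s := mxapp (1%:M - G) u.
  have E : u = u *m M - mxapp (J - 1%:M)^T s.
    rewrite Hid -/s {1}(Hu u) -/s /mxapp !trmxK mulmxBr mulmx1.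
    set a := s *m J; set b := u *m G^T.
    by rewrite opprB -addrA addrCA [a + (s - a)]addrCA subrr addr0 addrC.
  rewrite {1}E; apply: (le_trans (enormD _ _)); rewrite enormN lerD2l.
  exact: opnorm_tr.
have o0 := opnorm_ge0 (J - 1%:M).
case Emu : mu mu0 mum Ha => [r| |] // mu0 mum Ha.
- rewrite lte_fin in mu0.
  rewrite inver gt_eqF // -EFinM -EFinD lee_fin.
  apply: opnorm_inv_le => //; first by rewrite addr_ge0 // mulr_ge0 // invr_ge0 ltW.
  move=> u; apply: (le_trans (Hb u)).
  set s := mxapp (1%:M - G) u.
  have hs : r * enorm s <= enorm (u *m M).
    have [s0|s0] := eqVneq s 0; first by rewrite s0 enorm0 mulr0 enorm_ge0.
    have es : 0 < enorm s.
      by rewrite lt0r enorm_ge0 andbT; apply/eqP => /enorm_eq0 /eqP; rewrite (negbTE s0).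
    by have := Ha u s0; rewrite lee_fin ler_pdivlMr.
  have : opnorm (J - 1%:M) * (r * enorm s) <= opnorm (J - 1%:M) * enorm (u *m M).
    by rewrite ler_wpM2l.
  have : (opnorm (J - 1%:M) * r^-1) * (r * enorm s) = opnorm (J - 1%:M) * enorm s.
    by rewrite mulrA -(mulrA _ _ r) mulVf ?gt_eqF // mulr1.
  set a := opnorm (J - 1%:M) * r^-1.
  have : 0 <= a by rewrite mulr_ge0 // invr_ge0 ltW.
  nra.
- rewrite invey mule0 adde0 lee_fin.
  apply: opnorm_inv_le => // u; rewrite mul1r.
  have s0 : mxapp (1%:M - G) u = 0.
    apply/eqP; apply: contraT => s0; have := Ha u s0; by rewrite leye_eq.
  by have := Hb u; rewrite s0 enorm0 mulr0 addr0.
Qed.
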